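(* $\mathsf{MGrz}\vee\mathsf{GKur}=\mathsf{MGrz}\vee\mathsf{LKur}=\mathsf{MGrz}\vee\mathsf{N}$, where $\vee$ denotes the smallest extension of $\mathsf{MS4}$ containing both logics.
   Context: $\mathsf{MIPC}$ is the smallest set of formulas in the bimodal language $\mathcal{L}_{\forall\exists}$ containing all theorems of $\mathsf{IPC}$; $\forall(p\wedge q)\leftrightarrow(\forall p\wedge\forall q)$, $\forall p\to p$, $\forall p\to\forall\forall p$; $\exists(p\vee q)\leftrightarrow(\exists p\vee\exists q)$, $p\to\exists p$, $\exists\exists p\to\exists p$, $(\exists p\wedge\exists q)\to\exists(\exists p\wedge q)$; $\exists\forall p\to\forall p$, $\exists p\to\forall\exists p$; closed under modus ponens, substitution and $\varphi/\forall\varphi$. $\mathsf{Kur}=\mathsf{MIPC}+\forall\neg\neg p\to\neg\neg\forall p$. $\mathsf{MS4}$ is the smallest set of formulas in the classical bimodal language $\mathcal{L}_{\Box\forall}$ containing all classical tautologies, the $\mathsf{S4}$ axioms for $\Box$, the $\mathsf{S5}$ axioms for $\forall$, and $\Box\forall p\to\forall\Box p$, closed under modus ponens, substitution, $\Box$- and $\forall$-necessitation; $\Diamond=\neg\Box\neg$, $\exists=\neg\forall\neg$. $\mathsf{MGrz}=\mathsf{MS4}+\Box(\Box(p\to\Box p)\to p)\to p$; $\mathsf{LKur}=\mathsf{MS4}+\Box\forall\Diamond\Box p\to\Diamond\forall p$; $\mathsf{N}=\mathsf{MS4}+\Box\exists p\to\Diamond\exists\Box p$; $\mathsf{GKur}=\mathsf{MS4}+\{\varphi^t:\mathsf{Kur}\vdash\varphi\}$,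 where $(-)^t$ is the Gödel translation: $\bot^t=\bot$, $p^t=\Box p$, $(\varphi\wedge\psi)^t=\varphi^t\wedge\psi^t$, $(\varphi\vee\psi)^t=\varphi^t\vee\psi^t$, $(\varphi\to\psi)^t=\Box(\neg\varphi^t\vee\psi^t)$, $(\forall\varphi)^t=\Box\forall\varphi^t$, $(\exists\varphi)^t=\exists\varphi^t$. *)

(* Defs.v *)
From Stdlib Require Import Bool.

Inductive ifml : Type :=
| IVar : nat -> ifml
| IBot : ifml
| IAnd : ifml -> ifml -> ifml
| IOr  : ifml -> ifml -> ifml
| IImp : ifml -> ifml -> ifml
| IAll : ifml -> ifml
| IEx  : ifml -> ifml.

Definition INeg (a : ifml) : ifml := IImp a IBot.
Definition IIff (a b : ifml) : ifml := IAnd (IImp a b) (IImp b a).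

Fixpoint isubst (s : nat -> ifml) (a : ifml) : ifml :=
  match a with
  | IVar n => s n
  | IBot => IBot
  | IAnd a b => IAnd (isubst s a) (isubst s b)
  | IOr a b => IOr (isubst s a) (isubst s b)
  | IImp a b => IImp (isubst s a) (isubst s b)
  | IAll a => IAll (isubst s a)
  | IEx a => IEx (isubst s a)
  end.

(* Theorems of IPC (Hilbert calculus: axiom schemes + modus ponens),
   formulated over the whole language (modal subformulas act as atoms,
   i.e. these are exactly the substitution instances of IPC theorems). *)
Inductive IPC_thm : ifml -> Prop :=
| ipc_ax1 a b : IPC_thm (IImp a (IImp b a))
| ipc_ax2 a b c : IPC_thm (IImp (IImp a (IImp b c)) (IImp (IImp a b) (IImp a c)))
| ipc_ax3 a b : IPC_thm (IImp (IAnd a b) a)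
| ipc_ax4 a b : IPC_thm (IImp (IAnd a b) b)
| ipc_ax5 a b : IPC_thm (IImp a (IImp b (IAnd a b)))
| ipc_ax6 a b : IPC_thm (IImp a (IOr a b))
| ipc_ax7 a b : IPC_thm (IImp b (IOr a b))
| ipc_ax8 a b c : IPC_thm (IImp (IImp a c) (IImp (IImp b c) (IImp (IOr a b) c)))
| ipc_ax9 a : IPC_thm (IImp IBot a)
| ipc_mp a b : IPC_thm (IImp a b) -> IPC_thm a -> IPC_thm b.

Definition ip : ifml := IVar 0.
Definition iq : ifml := IVar 1.

Inductive MIPC_axiom : ifml -> Prop :=
| mipc_a1 : MIPC_axiom (IIff (IAll (IAnd ip iq)) (IAnd (IAll ip) (IAll iq)))
| mipc_a2 : MIPC_axiom (IImp (IAll ip) ip)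
| mipc_a3 : MIPC_axiom (IImp (IAll ip) (IAll (IAll ip)))
| mipc_a4 : MIPC_axiom (IIff (IEx (IOr ip iq)) (IOr (IEx ip) (IEx iq)))
| mipc_a5 : MIPC_axiom (IImp ip (IEx ip))
| mipc_a6 : MIPC_axiom (IImp (IEx (IEx ip)) (IEx ip))
| mipc_a7 : MIPC_axiom (IImp (IAnd (IEx ip) (IEx iq)) (IEx (IAnd (IEx ip) iq)))
| mipc_a8 : MIPC_axiom (IImp (IEx (IAll ip)) (IAll ip))
| mipc_a9 : MIPC_axiom (IImp (IEx ip) (IAll (IEx ip))).

Inductive MIPC_ext (G : ifml -> Prop) : ifml -> Prop :=
| mipcx_ipc a : IPC_thm a -> MIPC_ext G a
| mipcx_ax a : MIPC_axiom a -> MIPC_ext G a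
| mipcx_extra a : G a -> MIPC_ext G a
| mipcx_mp a b : MIPC_ext G (IImp a b) -> MIPC_ext G a -> MIPC_ext G b
| mipcx_subst s a : MIPC_ext G a -> MIPC_ext G (isubst s a)
| mipcx_nec a : MIPC_ext G a -> MIPC_ext G (IAll a).

Definition MIPC : ifml -> Prop := MIPC_ext (fun _ => False).

Definition kur_axiom : ifml :=
  IImp (IAll (INeg (INeg ip))) (INeg (INeg (IAll ip))).
Definition Kur : ifml -> Prop := MIPC_ext (fun a => a = kur_axiom).

Inductive cfml : Type :=
| CVar : nat -> cfml
| CBot : cfml
| CAnd : cfml -> cfml -> cfml
| COr  : cfml -> cfml -> cfml
| CImp : cfml -> cfml -> cfml
| CBox : cfml -> cfml
| CAll : cfml -> cfml.

Definition CNeg (a : cfml) : cfml := CImp a CBot.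
Definition CDia (a : cfml) : cfml := CNeg (CBox (CNeg a)).
Definition CEx  (a : cfml) : cfml := CNeg (CAll (CNeg a)).

Fixpoint csubst (s : nat -> cfml) (a : cfml) : cfml :=
  match a with
  | CVar n => s n
  | CBot => CBot
  | CAnd a b => CAnd (csubst s a) (csubst s b)
  | COr a b => COr (csubst s a) (csubst s b)
  | CImp a b => CImp (csubst s a) (csubst s b)
  | CBox a => CBox (csubst s a)
  | CAll a => CAll (csubst s a)
  end.

(* Classical tautologies: true under every boolean valuation of all formulas
   that respects the propositional connectives (modal formulas are atoms). *)
Definition boolean_valuation (f : cfml -> bool) : Prop :=
  f CBot = false /\
  (forall a b, f (CAnd a b) = f a && f b) /\
  (forall a b, f (COr a b) = f a || f b) /\
  (forall a b, f (CImp a b) = implb (f a) (f b)).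

Definition tautology (a : cfml) : Prop :=
  forall f, boolean_valuation f -> f a = true.

Definition cp : cfml := CVar 0.
Definition cq : cfml := CVar 1.

Inductive MS4_axiom : cfml -> Prop :=
| ms4_boxK : MS4_axiom (CImp (CBox (CImp cp cq)) (CImp (CBox cp) (CBox cq)))
| ms4_boxT : MS4_axiom (CImp (CBox cp) cp)
| ms4_box4 : MS4_axiom (CImp (CBox cp) (CBox (CBox cp)))
| ms4_allK : MS4_axiom (CImp (CAll (CImp cp cq)) (CImp (CAll cp) (CAll cq)))
| ms4_allT : MS4_axiom (CImp (CAll cp) cp)
| ms4_all5 : MS4_axiom (CImp (CEx cp) (CAll (CEx cp)))
| ms4_mix  : MS4_axiom (CImp (CBox (CAll cp)) (CAll (CBox cp))).

Inductive MS4_ext (G : cfml -> Prop) : cfml -> Prop :=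
| ms4x_taut a : tautology a -> MS4_ext G a
| ms4x_ax a : MS4_axiom a -> MS4_ext G a
| ms4x_extra a : G a -> MS4_ext G a
| ms4x_mp a b : MS4_ext G (CImp a b) -> MS4_ext G a -> MS4_ext G b
| ms4x_subst s a : MS4_ext G a -> MS4_ext G (csubst s a)
| ms4x_necbox a : MS4_ext G a -> MS4_ext G (CBox a)
| ms4x_necall a : MS4_ext G a -> MS4_ext G (CAll a).

Definition MS4 : cfml -> Prop := MS4_ext (fun _ => False).

Definition join (L1 L2 : cfml -> Prop) : cfml -> Prop :=
  MS4_ext (fun a => L1 a \/ L2 a).

Definition grz_axiom : cfml :=
  CImp (CBox (CImp (CBox (CImp cp (CBox cp))) cp)) cp.
Definition MGrz : cfml -> Prop := MS4_ext (fun a => a = grz_axiom).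

Definition lkur_axiom : cfml :=
  CImp (CBox (CAll (CDia (CBox cp)))) (CDia (CAll cp)).
Definition LKur : cfml -> Prop := MS4_ext (fun a => a = lkur_axiom).

Definition n_axiom : cfml :=
  CImp (CBox (CEx cp)) (CDia (CEx (CBox cp))).
Definition N : cfml -> Prop := MS4_ext (fun a => a = n_axiom).

Fixpoint godel (a : ifml) : cfml :=
  match a with
  | IVar n => CBox (CVar n)
  | IBot => CBot
  | IAnd a b => CAnd (godel a) (godel b)
  | IOr a b => COr (godel a) (godel b)
  | IImp a b => CBox (COr (CNeg (godel a)) (godel b))
  | IAll a => CBox (CAll (godel a))
  | IEx a => CEx (godel a)
  end.

Definition GKur : cfml -> Prop :=
  MS4_ext (fun a => exists b, Kur b /\ a = godel b).

(* Main.v *)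
Require Import Defs.
From Stdlib Require Import Bool.

Definition sub1 (a : cfml) : nat -> cfml := fun n => match n with 0 => a | _ => CVar n end.
Definition sub2 (a b : cfml) : nat -> cfml :=
  fun n => match n with 0 => a | 1 => b | _ => CVar n end.

Ltac taut :=
  let f := fresh "f" in let H := fresh "H" in
  let H0 := fresh "H0" in let Ha := fresh "Ha" in let Ho := fresh "Ho" in let Hi := fresh "Hi" in
  intros f H; unfold boolean_valuation in H; destruct H as (H0 & Ha & Ho & Hi);
  try unfold CDia, CEx; try unfold CNeg;
  repeat (first [rewrite H0 | rewrite Ha | rewrite Ho | rewrite Hi]);
  repeat match goal with |- context [f ?x] => destruct (f x) end; reflexivity.

Lemma Ttaut {G} a : tautology a -> MS4_ext G a.
Proof. exact (ms4x_taut G a). Qed.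
Lemma mpt1 {G} a c : MS4_ext G a -> tautology (CImp a c) -> MS4_ext G c.
Proof. intros Ha Ht. exact (ms4x_mp G a c (ms4x_taut G _ Ht) Ha). Qed.
Lemma mpt2 {G} a b c : MS4_ext G a -> MS4_ext G b -> tautology (CImp a (CImp b c)) -> MS4_ext G c.
Proof. intros Ha Hb Ht. exact (ms4x_mp G _ _ (ms4x_mp G _ _ (ms4x_taut G _ Ht) Ha) Hb). Qed.
Lemma mpt3 {G} a b c d : MS4_ext G a -> MS4_ext G b -> MS4_ext G c ->
  tautology (CImp a (CImp b (CImp c d))) -> MS4_ext G d.
Proof. intros Ha Hb Hc Ht. exact (ms4x_mp G _ _ (ms4x_mp G _ _ (ms4x_mp G _ _ (ms4x_taut G _ Ht) Ha) Hb) Hc). Qed.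
Lemma mpt4 {G} a b c d e : MS4_ext G a -> MS4_ext G b -> MS4_ext G c -> MS4_ext G d ->
  tautology (CImp a (CImp b (CImp c (CImp d e)))) -> MS4_ext G e.
Proof. intros Ha Hb Hc Hd Ht.
  exact (ms4x_mp G _ _ (ms4x_mp G _ _ (ms4x_mp G _ _ (ms4x_mp G _ _ (ms4x_taut G _ Ht) Ha) Hb) Hc) Hd). Qed.

Lemma syl {G} a b c : MS4_ext G (CImp a b) -> MS4_ext G (CImp b c) -> MS4_ext G (CImp a c).
Proof. intros H1 H2; apply (mpt2 _ _ _ H1 H2); taut. Qed.
Lemma andI {G} a b : MS4_ext G a -> MS4_ext G b -> MS4_ext G (CAnd a b).
Proof. intros H1 H2; apply (mpt2 _ _ _ H1 H2); taut. Qed.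

Lemma nec_box {G} a : MS4_ext G a -> MS4_ext G (CBox a). Proof. exact (ms4x_necbox G a). Qed.
Lemma nec_all {G} a : MS4_ext G a -> MS4_ext G (CAll a). Proof. exact (ms4x_necall G a). Qed.
Lemma K_box {G} a b : MS4_ext G (CImp (CBox (CImp a b)) (CImp (CBox a) (CBox b))).
Proof. exact (ms4x_subst G (sub2 a b) _ (ms4x_ax G _ ms4_boxK)). Qed.
Lemma T_box {G} a : MS4_ext G (CImp (CBox a) a).
Proof. exact (ms4x_subst G (sub1 a) _ (ms4x_ax G _ ms4_boxT)). Qed.
Lemma four_box {G} a : MS4_ext G (CImp (CBox a) (CBox (CBox a))).
Proof. exact (ms4x_subst G (sub1 a) _ (ms4x_ax G _ ms4_box4)). Qed.
Lemma K_all {G} a b : MS4_ext G (CImp (CAll (CImp a b)) (CImp (CAll a) (CAll b))).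
Proof. exact (ms4x_subst G (sub2 a b) _ (ms4x_ax G _ ms4_allK)). Qed.
Lemma T_all {G} a : MS4_ext G (CImp (CAll a) a).
Proof. exact (ms4x_subst G (sub1 a) _ (ms4x_ax G _ ms4_allT)). Qed.
Lemma five_all {G} a : MS4_ext G (CImp (CEx a) (CAll (CEx a))).
Proof. exact (ms4x_subst G (sub1 a) _ (ms4x_ax G _ ms4_all5)). Qed.
Lemma mix {G} a : MS4_ext G (CImp (CBox (CAll a)) (CAll (CBox a))).
Proof. exact (ms4x_subst G (sub1 a) _ (ms4x_ax G _ ms4_mix)). Qed.

Lemma box_mono {G} a b : MS4_ext G (CImp a b) -> MS4_ext G (CImp (CBox a) (CBox b)).
Proof. intro H. exact (ms4x_mp G _ _ (K_box a b) (nec_box _ H)). Qed.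
Lemma all_mono {G} a b : MS4_ext G (CImp a b) -> MS4_ext G (CImp (CAll a) (CAll b)).
Proof. intro H. exact (ms4x_mp G _ _ (K_all a b) (nec_all _ H)). Qed.

Lemma box_and {G} a b : MS4_ext G (CImp (CAnd (CBox a) (CBox b)) (CBox (CAnd a b))).
Proof.
  assert (H1 : MS4_ext G (CImp (CBox a) (CBox (CImp b (CAnd a b))))) by (apply box_mono; apply Ttaut; taut).
  pose proof (K_box (G:=G) b (CAnd a b)) as H2.
  apply (mpt2 _ _ _ H1 H2); taut.
Qed.
Lemma all_and {G} a b : MS4_ext G (CImp (CAnd (CAll a) (CAll b)) (CAll (CAnd a b))).
Proof.
  assert (H1 : MS4_ext G (CImp (CAll a) (CAll (CImp b (CAnd a b))))) by (apply all_mono; apply Ttaut; taut).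
  pose proof (K_all (G:=G) b (CAnd a b)) as H2.
  apply (mpt2 _ _ _ H1 H2); taut.
Qed.
Lemma box_or {G} a b : MS4_ext G (CImp (COr (CBox a) (CBox b)) (CBox (COr a b))).
Proof.
  assert (H1 : MS4_ext G (CImp (CBox a) (CBox (COr a b)))) by (apply box_mono; apply Ttaut; taut).
  assert (H2 : MS4_ext G (CImp (CBox b) (CBox (COr a b)))) by (apply box_mono; apply Ttaut; taut).
  apply (mpt2 _ _ _ H1 H2); taut.
Qed.
Lemma dia_mono {G} a b : MS4_ext G (CImp a b) -> MS4_ext G (CImp (CDia a) (CDia b)).
Proof. intro H.
  assert (H1 : MS4_ext G (CImp (CNeg b) (CNeg a))) by (apply (mpt1 _ _ H); taut).
  apply box_mono in H1. apply (mpt1 _ _ H1); taut. Qed.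
Lemma ex_mono {G} a b : MS4_ext G (CImp a b) -> MS4_ext G (CImp (CEx a) (CEx b)).
Proof. intro H.
  assert (H1 : MS4_ext G (CImp (CNeg b) (CNeg a))) by (apply (mpt1 _ _ H); taut).
  apply all_mono in H1. apply (mpt1 _ _ H1); taut. Qed.
Lemma ex_K {G} a b : MS4_ext G (CImp (CAll (CImp a b)) (CImp (CEx a) (CEx b))).
Proof.
  assert (H1 : MS4_ext G (CImp (CAll (CImp a b)) (CAll (CImp (CNeg b) (CNeg a)))))
    by (apply all_mono; apply Ttaut; taut).
  pose proof (K_all (G:=G) (CNeg b) (CNeg a)) as H2.
  apply (mpt2 _ _ _ H1 H2); taut.
Qed.
Lemma dia_T {G} a : MS4_ext G (CImp a (CDia a)).
Proof. apply (mpt1 _ _ (T_box (G:=G) (CNeg a))); taut. Qed.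
Lemma ex_T {G} a : MS4_ext G (CImp a (CEx a)).
Proof. apply (mpt1 _ _ (T_all (G:=G) (CNeg a))); taut. Qed.
Lemma dia4 {G} a : MS4_ext G (CImp (CDia (CDia a)) (CDia a)).
Proof.
  pose proof (four_box (G:=G) (CNeg a)) as H1.
  assert (H2 : MS4_ext G (CImp (CBox (CBox (CNeg a))) (CBox (CNeg (CDia a)))))
    by (apply box_mono; apply Ttaut; taut).
  apply (mpt2 _ _ _ H1 H2); taut.
Qed.

Lemma B_all {G} a : MS4_ext G (CImp a (CAll (CEx a))).
Proof. apply (mpt2 _ _ _ (five_all (G:=G) a) (T_all (G:=G) (CNeg a))); taut. Qed.

Lemma s1 {G} a : MS4_ext G (CImp (CEx (CAll a)) (CAll a)).
Proof.
  assert (H1 : MS4_ext G (CImp (CAll a) (CAll (CNeg (CNeg a))))) by (apply all_mono; apply Ttaut; taut).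
  assert (H2 : MS4_ext G (CImp (CAll (CNeg (CNeg a))) (CAll a))) by (apply all_mono; apply Ttaut; taut).
  pose proof (five_all (G:=G) (CNeg a)) as H3.
  assert (H4 : MS4_ext G (CImp (CAll (CEx (CNeg a))) (CAll (CNeg (CAll a))))).
  { apply all_mono. apply (mpt1 _ _ H1); taut. }
  apply (mpt3 _ _ _ _ H2 H3 H4); taut.
Qed.

Lemma s3 {G} a : MS4_ext G (CImp (CAll a) (CAll (CAll a))).
Proof. apply (syl _ _ _ (B_all (CAll a))). apply all_mono, s1. Qed.

Lemma s4 {G} a : MS4_ext G (CImp (CEx (CEx a)) (CEx a)).
Proof.
  pose proof (s3 (G:=G) (CNeg a)) as H1.
  assert (H2 : MS4_ext G (CImp (CAll (CAll (CNeg a))) (CAll (CNeg (CEx a))))) by (apply all_mono; apply Ttaut; taut).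
  apply (mpt2 _ _ _ H1 H2); taut.
Qed.

Lemma s5 {G} a b : MS4_ext G (CImp (CAnd (CEx a) (CEx b)) (CEx (CAnd (CEx a) b))).
Proof.
  pose proof (five_all (G:=G) a) as H1.
  assert (H2 : MS4_ext G (CImp (CAll (CEx a)) (CAll (CImp b (CAnd (CEx a) b))))) by (apply all_mono; apply Ttaut; taut).
  pose proof (ex_K (G:=G) b (CAnd (CEx a) b)) as H3.
  apply (mpt3 _ _ _ _ H1 H2 H3); taut.
Qed.

Lemma s6a {G} a b : MS4_ext G (CImp (CEx (COr a b)) (COr (CEx a) (CEx b))).
Proof.
  pose proof (all_and (G:=G) (CNeg a) (CNeg b)) as H1.
  assert (H2 : MS4_ext G (CImp (CAll (CAnd (CNeg a) (CNeg b))) (CAll (CNeg (COr a b))))) by (apply all_mono; apply Ttaut; taut).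
  apply (mpt2 _ _ _ H1 H2); taut.
Qed.
Lemma s6b {G} a b : MS4_ext G (CImp (COr (CEx a) (CEx b)) (CEx (COr a b))).
Proof.
  assert (H1 : MS4_ext G (CImp (CEx a) (CEx (COr a b)))) by (apply ex_mono; apply Ttaut; taut).
  assert (H2 : MS4_ext G (CImp (CEx b) (CEx (COr a b)))) by (apply ex_mono; apply Ttaut; taut).
  apply (mpt2 _ _ _ H1 H2); taut.
Qed.

Lemma m1 {G} a : MS4_ext G (CImp (CEx (CBox a)) (CBox (CEx a))).
Proof.
  pose proof (box_mono _ _ (B_all (G:=G) a)) as H1.
  pose proof (mix (G:=G) (CEx a)) as H2.
  pose proof (ex_mono _ _ (syl _ _ _ H1 H2)) as H3.
  pose proof (s1 (G:=G) (CBox (CEx a))) as H4.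
  pose proof (T_all (G:=G) (CBox (CEx a))) as H5.
  exact (syl _ _ _ H3 (syl _ _ _ H4 H5)).
Qed.

Lemma m2 {G} a : MS4_ext G (CImp (CEx (CDia a)) (CDia (CEx a))).
Proof.
  assert (H1 : MS4_ext G (CImp (CBox (CNeg (CEx a))) (CBox (CAll (CNeg a))))) by (apply box_mono; apply Ttaut; taut).
  pose proof (mix (G:=G) (CNeg a)) as H2.
  assert (H3 : MS4_ext G (CImp (CAll (CBox (CNeg a))) (CAll (CNeg (CDia a))))) by (apply all_mono; apply Ttaut; taut).
  apply (mpt3 _ _ _ _ H1 H2 H3); taut.
Qed.

Lemma ex_stab {G} a : MS4_ext G (CImp a (CBox a)) -> MS4_ext G (CImp (CEx a) (CBox (CEx a))).
Proof. intro H. exact (syl _ _ _ (ex_mono _ _ H) (m1 a)). Qed.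

Lemma McK {G} (HG : MS4_ext G grz_axiom) a :
  MS4_ext G (CImp (CBox (CDia a)) (CDia (CBox a))).
Proof.
  pose (Hh := CBox (CImp (CNeg a) (CBox (CNeg a)))).
  pose (Y := CAnd a Hh).
  pose proof (ms4x_subst G (sub1 (CNeg a)) _ HG) as G0.
  change (MS4_ext G (CImp (CBox (CImp Hh (CNeg a))) (CNeg a))) in G0.
  assert (G1 : MS4_ext G (CImp (CBox (CNeg Y)) (CBox (CImp Hh (CNeg a))))) by (apply box_mono; apply Ttaut; unfold Y; taut).
  assert (Ga : MS4_ext G (CImp a (CDia Y))) by (apply (mpt2 _ _ _ G0 G1); taut).
  pose proof (syl _ _ _ (dia_mono _ _ Ga) (dia4 Y)) as Gb.
  assert (H1 : MS4_ext G (CImp Hh (CBox (CImp (CDia a) a)))) by (apply box_mono; apply Ttaut; taut).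
  pose proof (K_box (G:=G) (CDia a) a) as H2.
  pose proof (T_box (G:=G) (CNeg (CBox a))) as H3.
  pose (P := CAnd (CBox (CDia a)) (CBox (CNeg (CBox a)))).
  assert (Hc : MS4_ext G (CImp P (CNeg Y))) by (apply (mpt3 _ _ _ _ H1 H2 H3); unfold P, Y; taut).
  assert (Hd : MS4_ext G (CImp P (CBox P))).
  { pose proof (four_box (G:=G) (CDia a)) as F1.
    pose proof (four_box (G:=G) (CNeg (CBox a))) as F2.
    pose proof (box_and (G:=G) (CBox (CDia a)) (CBox (CNeg (CBox a)))) as F3.
    apply (mpt3 _ _ _ _ F1 F2 F3); unfold P; taut. }
  pose proof (syl _ _ _ Hd (box_mono _ _ Hc)) as He.
  pose proof (T_box (G:=G) (CDia a)) as Hf.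
  apply (mpt3 _ _ _ _ Hf Gb He); unfold P; taut.
Qed.

Definition nn (x : cfml) : cfml := CBox (COr (CNeg (CBox (COr (CNeg x) CBot))) CBot).

Lemma nn_to {G} x : MS4_ext G (CImp (nn x) (CBox (CDia x))).
Proof. apply box_mono.
  assert (H : MS4_ext G (CImp (CBox (CNeg x)) (CBox (COr (CNeg x) CBot)))) by (apply box_mono; apply Ttaut; taut).
  apply (mpt1 _ _ H); taut. Qed.
Lemma nn_from {G} x : MS4_ext G (CImp (CBox (CDia x)) (nn x)).
Proof. apply box_mono.
  assert (H : MS4_ext G (CImp (CBox (COr (CNeg x) CBot)) (CBox (CNeg x)))) by (apply box_mono; apply Ttaut; taut).
  apply (mpt1 _ _ H); taut. Qed.

Lemma lkur_from_n {G} (HN : MS4_ext G n_axiom) : MS4_ext G lkur_axiom.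
Proof.
  assert (A1 : MS4_ext G (CImp (CAll (CNeg (CNeg cp))) (CAll cp))) by (apply all_mono; apply Ttaut; taut).
  assert (A2 : MS4_ext G (CImp (CBox (CNeg (CAll cp))) (CBox (CEx (CNeg cp))))).
  { apply box_mono. apply (mpt1 _ _ A1); taut. }
  pose proof (ms4x_subst G (sub1 (CNeg cp)) _ HN) as A3.
  change (MS4_ext G (CImp (CBox (CEx (CNeg cp))) (CDia (CEx (CBox (CNeg cp)))))) in A3.
  assert (A4 : MS4_ext G (CImp (CBox (CAll (CDia (CBox cp)))) (CBox (CNeg (CEx (CBox (CNeg cp))))))).
  { apply box_mono. apply (mpt1 _ _ (all_mono _ _ (dia_mono _ _ (T_box (G:=G) cp)))); taut. }
  apply (mpt3 _ _ _ _ A2 A3 A4); unfold lkur_axiom; taut.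
Qed.

Lemma n_from_lkur {G} (HG : MS4_ext G grz_axiom) (HL : MS4_ext G lkur_axiom) : MS4_ext G n_axiom.
Proof.
  pose proof (ms4x_subst G (sub1 (CNeg cp)) _ HL) as L.
  change (MS4_ext G (CImp (CBox (CAll (CDia (CBox (CNeg cp))))) (CDia (CAll (CNeg cp))))) in L.
  assert (B2 : MS4_ext G (CImp (CBox (CNeg (CEx (CBox (CDia cp))))) (CBox (CAll (CDia (CBox (CNeg cp)))))))
    by (apply box_mono; apply Ttaut; taut).
  pose proof (ex_mono _ _ (McK HG cp)) as B3.
  pose proof (m2 (G:=G) (CBox cp)) as B4.
  pose proof (syl _ _ _ (dia_mono _ _ (syl _ _ _ B3 B4)) (dia4 _)) as B5.
  apply (mpt3 _ _ _ _ L B2 B5); unfold n_axiom; taut.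
Qed.

Lemma gk_form : godel kur_axiom = CBox (COr (CNeg (CBox (CAll (nn (CBox cp))))) (nn (CBox (CAll (CBox cp))))).
Proof. reflexivity. Qed.

Lemma lkur_from_gkur {G} (HK : MS4_ext G (godel kur_axiom)) : MS4_ext G lkur_axiom.
Proof.
  rewrite gk_form in HK.
  pose proof (T_box (G:=G) (COr (CNeg (CBox (CAll (nn (CBox cp))))) (nn (CBox (CAll (CBox cp)))))) as C0.
  pose proof (ms4x_mp _ _ _ C0 HK) as C1.
  pose proof (syl _ _ _ (four_box (G:=G) (CAll (CDia (CBox cp)))) (box_mono _ _ (mix (CDia (CBox cp))))) as C2.
  pose proof (box_mono _ _ (all_mono _ _ (nn_from (G:=G) (CBox cp)))) as C3.
  pose proof (nn_to (G:=G) (CBox (CAll (CBox cp)))) as C4.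
  pose proof (T_box (G:=G) (CDia (CBox (CAll (CBox cp))))) as C5.
  pose proof (dia_mono _ _ (T_box (G:=G) (CAll (CBox cp)))) as C6.
  pose proof (dia_mono _ _ (all_mono _ _ (T_box (G:=G) cp))) as C7.
  assert (C8 : MS4_ext G (CImp (CBox (CAll (CNeg (CBox cp)))) (CImp (CBox (CAll (nn (CBox cp)))) (nn (CBox (CAll (CBox cp))))))) .
  { apply (mpt1 _ _ C1); taut. }
  clear C0 C8.
  assert (D : MS4_ext G (CImp (CBox (CAll (nn (CBox cp)))) (nn (CBox (CAll (CBox cp)))))) by (apply (mpt1 _ _ C1); taut).
  exact (syl _ _ _ C2 (syl _ _ _ C3 (syl _ _ _ D (syl _ _ _ C4 (syl _ _ _ C5 (syl _ _ _ C6 C7)))))).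
Qed.

Lemma gkur_from_lkur {G} (HG : MS4_ext G grz_axiom) (HL : MS4_ext G lkur_axiom) : MS4_ext G (godel kur_axiom).
Proof.
  rewrite gk_form. apply nec_box.
  pose proof (box_mono _ _ (all_mono _ _ (nn_to (G:=G) (CBox cp)))) as D1.
  assert (D2 : MS4_ext G (CImp (CBox (CAll (CBox (CDia (CBox cp))))) (CBox (CAll (CDia (CBox (CBox cp))))))).
  { apply box_mono, all_mono. exact (syl _ _ _ (T_box _) (dia_mono _ _ (four_box cp))). }
  pose proof (ms4x_subst G (sub1 (CBox cp)) _ HL) as D3.
  change (MS4_ext G (CImp (CBox (CAll (CDia (CBox (CBox cp))))) (CDia (CAll (CBox cp))))) in D3.
  pose proof (syl _ _ _ (four_box _) (box_mono _ _ (syl _ _ _ D2 D3))) as D4.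
  pose proof (syl _ _ _ D4 (McK HG (CAll (CBox cp)))) as D5.
  pose proof (syl _ _ _ (four_box _) (box_mono _ _ D5)) as D6.
  pose proof (syl _ _ _ D1 (syl _ _ _ D6 (nn_from _))) as D7.
  apply (mpt1 _ _ D7); taut.
Qed.

Lemma impI {G} a b : MS4_ext G (CImp a b) -> MS4_ext G (CBox (COr (CNeg a) b)).
Proof. intro H. apply nec_box. apply (mpt1 _ _ H); taut. Qed.
Lemma impE {G} a b : MS4_ext G (CBox (COr (CNeg a) b)) -> MS4_ext G (CImp a b).
Proof. intro H. pose proof (T_box (G:=G) (COr (CNeg a) b)) as H0. apply (mpt2 _ _ _ H H0); taut. Qed.
Lemma impI2 {G} x y z : MS4_ext G (CImp (CAnd x y) z) -> MS4_ext G (CImp x (CBox x)) ->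
  MS4_ext G (CBox (COr (CNeg x) (CBox (COr (CNeg y) z)))).
Proof. intros H1 H2. apply impI. eapply syl. exact H2. apply box_mono. apply (mpt1 _ _ H1); taut. Qed.

Lemma stab {G} a : MS4_ext G (CImp (godel a) (CBox (godel a))).
Proof.
  induction a; simpl.
  - apply four_box.
  - apply Ttaut; taut.
  - apply (mpt3 _ _ _ _ IHa1 IHa2 (box_and (godel a1) (godel a2))); taut.
  - pose proof (box_or (G:=G) (godel a1) (godel a2)) as H.
    apply (mpt3 _ _ _ _ IHa1 IHa2 H); taut.
  - apply four_box.
  - apply four_box.
  - apply ex_stab; exact IHa.
Qed.

Lemma subst_equiv {G} (s : nat -> ifml) a :
  MS4_ext G (CImp (csubst (fun n => godel (s n)) (godel a)) (godel (isubst s a))) /\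
  MS4_ext G (CImp (godel (isubst s a)) (csubst (fun n => godel (s n)) (godel a))).
Proof.
  induction a; simpl.
  - split. apply T_box. apply stab.
  - split; apply Ttaut; taut.
  - destruct IHa1 as [H1 H2], IHa2 as [H3 H4]; split.
    + apply (mpt2 _ _ _ H1 H3); taut.
    + apply (mpt2 _ _ _ H2 H4); taut.
  - destruct IHa1 as [H1 H2], IHa2 as [H3 H4]; split.
    + apply (mpt2 _ _ _ H1 H3); taut.
    + apply (mpt2 _ _ _ H2 H4); taut.
  - destruct IHa1 as [H1 H2], IHa2 as [H3 H4]; split; apply box_mono.
    + apply (mpt2 _ _ _ H2 H3); taut.
    + apply (mpt2 _ _ _ H1 H4); taut.
  - destruct IHa as [H1 H2]; split; apply box_mono, all_mono; assumption.
  - destruct IHa as [H1 H2]; split; apply (ex_mono _ _); assumption.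
Qed.

Lemma ipc_godel {G} b : IPC_thm b -> MS4_ext G (godel b).
Proof.
  induction 1; simpl.
  - apply impI2; [apply Ttaut; taut | apply stab].
  - apply impI2; [ | apply four_box].
    set (A := godel a); set (B := godel b); set (C := godel c).
    assert (H1 : MS4_ext G (CImp (CBox (COr (CNeg A) (CBox (COr (CNeg B) C)))) (CBox (COr (CNeg A) (COr (CNeg B) C))))).
    { apply box_mono. apply (mpt1 _ _ (T_box (G:=G) (COr (CNeg B) C))); taut. }
    pose proof (box_and (G:=G) (COr (CNeg A) (COr (CNeg B) C)) (COr (CNeg A) B)) as H2.
    assert (H3 : MS4_ext G (CImp (CBox (CAnd (COr (CNeg A) (COr (CNeg B) C)) (COr (CNeg A) B))) (CBox (COr (CNeg A) C))))
      by (apply box_mono; apply Ttaut; taut).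
    apply (mpt3 _ _ _ _ H1 H2 H3); taut.
  - apply impI; apply Ttaut; taut.
  - apply impI; apply Ttaut; taut.
  - apply impI2; [apply Ttaut; taut | apply stab].
  - apply impI; apply Ttaut; taut.
  - apply impI; apply Ttaut; taut.
  - apply impI2; [ | apply four_box].
    set (A := godel a); set (B := godel b); set (C := godel c).
    pose proof (box_and (G:=G) (COr (CNeg A) C) (COr (CNeg B) C)) as H1.
    assert (H2 : MS4_ext G (CImp (CBox (CAnd (COr (CNeg A) C) (COr (CNeg B) C))) (CBox (COr (CNeg (COr A B)) C))))
      by (apply box_mono; apply Ttaut; taut).
    exact (syl _ _ _ H1 H2).
  - apply impI; apply Ttaut; taut.
  - exact (ms4x_mp _ _ _ (impE _ _ IHIPC_thm1) IHIPC_thm2).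
Qed.

Lemma mipc_godel {G} b : MIPC_axiom b -> MS4_ext G (godel b).
Proof.
  destruct 1; simpl; set (A := CBox (CVar 0)); set (B := CBox (CVar 1)).
  - apply andI; apply impI.
    + assert (H1 : MS4_ext G (CImp (CBox (CAll (CAnd A B))) (CBox (CAll A)))) by (apply box_mono, all_mono, Ttaut; taut).
      assert (H2 : MS4_ext G (CImp (CBox (CAll (CAnd A B))) (CBox (CAll B)))) by (apply box_mono, all_mono, Ttaut; taut).
      apply (mpt2 _ _ _ H1 H2); taut.
    + exact (syl _ _ _ (box_and _ _) (box_mono _ _ (all_and A B))).
  - apply impI. exact (syl _ _ _ (T_box _) (T_all _)).
  - apply impI. exact (syl _ _ _ (four_box _) (box_mono _ _ (syl _ _ _ (box_mono _ _ (s3 A)) (mix (CAll A))))).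
  - apply andI; apply impI; [apply s6a | apply s6b].
  - apply impI, ex_T.
  - apply impI, s4.
  - apply impI, s5.
  - apply impI. exact (syl _ _ _ (m1 (CAll A)) (box_mono _ _ (s1 A))).
  - apply impI. exact (syl _ _ _ (ex_stab _ (four_box _)) (box_mono _ _ (five_all A))).
Qed.

Lemma godel_kur {G} : MS4_ext G (godel kur_axiom) -> forall b, Kur b -> MS4_ext G (godel b).
Proof.
  intros HK b Hb. induction Hb.
  - apply ipc_godel; assumption.
  - apply mipc_godel; assumption.
  - subst; exact HK.
  - exact (ms4x_mp _ _ _ (impE _ _ IHHb1) IHHb2).
  - destruct (subst_equiv (G:=G) s a) as [H1 _].
    exact (ms4x_mp _ _ _ H1 (ms4x_subst _ _ _ IHHb)).
  - simpl. apply nec_box, nec_all. assumption.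
Qed.

Lemma ext_incl (G1 G2 : cfml -> Prop) : (forall a, G1 a -> MS4_ext G2 a) ->
  forall a, MS4_ext G1 a -> MS4_ext G2 a.
Proof.
  intros H a Ha; induction Ha.
  - apply ms4x_taut; assumption.
  - apply ms4x_ax; assumption.
  - apply H; assumption.
  - eapply ms4x_mp; eauto.
  - apply ms4x_subst; assumption.
  - apply ms4x_necbox; assumption.
  - apply ms4x_necall; assumption.
Qed.

Theorem proposition5p10 :
  (forall a : cfml, join MGrz GKur a <-> join MGrz LKur a) /\
  (forall a : cfml, join MGrz LKur a <-> join MGrz N a).
Proof.
  assert (grz_in : forall X, join MGrz X grz_axiom)
    by (intro X; exact (ms4x_extra _ _ (or_introl (ms4x_extra _ _ eq_refl)))).
  assert (lk_in : join MGrz LKur lkur_axiom)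
    by exact (ms4x_extra _ _ (or_intror (ms4x_extra _ _ eq_refl))).
  assert (n_in : join MGrz N n_axiom)
    by exact (ms4x_extra _ _ (or_intror (ms4x_extra _ _ eq_refl))).
  assert (gk_in : join MGrz GKur (godel kur_axiom)).
  { apply ms4x_extra; right. apply ms4x_extra. exists kur_axiom. split; [apply mipcx_extra; reflexivity | reflexivity]. }
  split; intro a; split; intro H; unfold join in *.
  - refine (ext_incl _ _ _ a H).
    intros b [Hb|Hb]; [apply ms4x_extra; left; exact Hb|].
    refine (ext_incl _ _ _ b Hb).
    intros c [b' [Hk ->]]. apply godel_kur; [|exact Hk].
    apply gkur_from_lkur; [apply grz_in | exact lk_in].
  - refine (ext_incl _ _ _ a H).
    intros b [Hb|Hb]; [apply ms4x_extra; left; exact Hb|].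
    refine (ext_incl _ _ _ b Hb).
    intros c ->. apply lkur_from_gkur; exact gk_in.
  - refine (ext_incl _ _ _ a H).
    intros b [Hb|Hb]; [apply ms4x_extra; left; exact Hb|].
    refine (ext_incl _ _ _ b Hb).
    intros c ->. apply lkur_from_n; exact n_in.
  - refine (ext_incl _ _ _ a H).
    intros b [Hb|Hb]; [apply ms4x_extra; left; exact Hb|].
    refine (ext_incl _ _ _ b Hb).
    intros c ->. apply n_from_lkur; [apply grz_in | exact lk_in].
Qed.
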